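(* Let $\Gamma$ be a finite undirected simple graph with vertices $x_1,\dots,x_n$ and edge set $E$, let $G_\Gamma$ be the associated group, and let $y_1,\dots,y_N$ be the commutator generators of $G_\Gamma$ (notation as in the context). Let $i_0\in\{1,\dots,n\}$ and let $z_{i_0},t_1,\dots,t_N\in\mathbb{Z}$ with $z_{i_0}\neq 0$. Then \[h\Big(Z_{G_\Gamma}\Big(x_{i_0}^{z_{i_0}}\prod_{l=1}^N y_l^{t_l}\Big)\Big)=\deg(x_{i_0})+N+1,\] where $Z_{G_\Gamma}(g)$ denotes the centralizer of $g$ in $G_\Gamma$ and $h$ denotes the Hirsch number.
   Context: For a finite undirected simple graph $\Gamma$ with vertex set $\{x_1,\dots,x_n\}$ and edge set $E$, the group $G_\Gamma$ is defined by the presentation with generators $x_1,\dots,x_n$ and $y_{i,j}$ for each pair $i<j$ with $x_ix_j\notin E$, and relations $[x_j,x_i]=1$ if $x_ix_j\in E$; $[x_j,x_i]=y_{i,j}$ if $x_ix_j\notin E$ and $i<j$; and $[x_l,y_{i,j}]=1$ for all $l$ and all such $y_{i,j}$. (It is the 2-step nilpotent quotient of the right-angled Artin group of $\Gamma$.) Let $N$ be the number of pairs $i<j$ with $x_ix_j\notin E$, and enumerate the $y_{i,j}$ as $y_1,\dots,y_N$. Every element of $G_\Gamma$ is uniquely of the form $x_1^{z_1}\cdots x_n^{z_n}y_1^{t_1}\cdots y_N^{t_N}$ with $z_i,t_l\in\mathbb{Z}$. The Hirsch number $h(G)$ of a finitely generated nilpotent group $G$ is the number of infinite cyclic factors in any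 subnormal series of $G$ with cyclic factors. *)

(* Defs.v *)
From HB Require Import structures.
From mathcomp Require Import all_boot all_order all_algebra.
Set Implicit Arguments. Unset Strict Implicit. Unset Printing Implicit Defensive.
Import Order.TTheory GRing.Theory Num.Theory.
Local Open Scope ring_scope.

(* A finite simple graph on vertices 'I_n is a symmetric irreflexive
   relation e : rel 'I_n (vertex x_(i+1) of the paper is i : 'I_n). *)

(* Non-edges i < j: they index the commutator generators y_{i,j}. *)
Definition nonedge n (e : rel 'I_n) (p : 'I_n * 'I_n) : bool :=
  ((p.1 < p.2)%N && ~~ e p.1 p.2).

Definition Pairs n (e : rel 'I_n) := {p : 'I_n * 'I_n | nonedge e p}.

(* Normal form model of G_Gamma: (z, t) stands for
   x_1^{z_1} ... x_n^{z_n} * prod_{(i,j)} y_{i,j}^{t_{i,j}}. *)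
Definition GG n (e : rel 'I_n) := ({ffun 'I_n -> int} * {ffun Pairs e -> int})%type.

(* Convention: [a,b] = a^-1 b^-1 a b, so x_j x_i = x_i x_j y_{ij} for i<j
   non-adjacent; hence x_j^a x_i^b = x_i^b x_j^a y_{ij}^{ab}. *)
Definition cocyc n (e : rel 'I_n) (z z' : {ffun 'I_n -> int}) : {ffun Pairs e -> int} :=
  [ffun p => z (val p).2 * z' (val p).1].

Definition gmul n (e : rel 'I_n) (a b : GG e) : GG e :=
  ([ffun i => a.1 i + b.1 i], [ffun p => a.2 p + b.2 p + cocyc e a.1 b.1 p]).

Definition gone n (e : rel 'I_n) : GG e := ([ffun => 0], [ffun => 0]).

Definition ginv n (e : rel 'I_n) (a : GG e) : GG e :=
  ([ffun i => - a.1 i], [ffun p => - a.2 p + cocyc e a.1 a.1 p]).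

Definition gpow n (e : rel 'I_n) (a : GG e) (k : int) : GG e :=
  match k with
  | Posz m => iter m (gmul a) (gone e)
  | Negz m => ginv (iter m.+1 (gmul a) (gone e))
  end.

Definition gen_elt n (e : rel 'I_n) (i0 : 'I_n) (z0 : int) (t : {ffun Pairs e -> int}) : GG e :=
  ([ffun i => if i == i0 then z0 else 0], t).

Definition centralizer n (e : rel 'I_n) (g : GG e) : GG e -> Prop :=
  fun h => gmul h g = gmul g h.

Definition is_subgroup n (e : rel 'I_n) (H : GG e -> Prop) : Prop :=
  [/\ H (gone e), (forall a b, H a -> H b -> H (gmul a b)) & (forall a, H a -> H (ginv a))].

Definition normal_in n (e : rel 'I_n) (K H : GG e -> Prop) : Prop :=
  [/\ is_subgroup K, (forall a, K a -> H a) &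
      (forall h k, H h -> K k -> K (gmul (ginv h) (gmul k h)))].

Definition cyclic_quotient n (e : rel 'I_n) (K H : GG e -> Prop) : Prop :=
  exists2 g, H g & forall h, H h -> exists k : int, K (gmul h (gpow g (- k))).

Definition finite_quotient n (e : rel 'I_n) (K H : GG e -> Prop) : Prop :=
  exists s : seq (GG e), forall h, H h -> exists2 a, a \in s & K (gmul (ginv a) h).

Definition cyclic_series n (e : rel 'I_n) (H : GG e -> Prop) (m : nat)
    (s : nat -> GG e -> Prop) : Prop :=
  [/\ (forall a, s 0%N a <-> H a), (forall a, s m a <-> a = gone e),
      (forall i, (i < m)%N -> is_subgroup (s i)),
      (forall i, (i < m)%N -> normal_in (s i.+1) (s i)) &
      (forall i, (i < m)%N -> cyclic_quotient (s i.+1) (s i))].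

Definition num_infinite_factors n (e : rel 'I_n) (m : nat) (s : nat -> GG e -> Prop)
    (k : nat) : Prop :=
  exists2 I : {set 'I_m}, #|I| = k &
    forall i : 'I_m, i \in I <-> ~ finite_quotient (s (val i).+1) (s (val i)).

Definition hirsch_number n (e : rel 'I_n) (H : GG e -> Prop) (k : nat) : Prop :=
  (exists m s, @cyclic_series n e H m s) /\
  (forall m s, @cyclic_series n e H m s -> @num_infinite_factors n e m s k).

(* Main.v *)
From HB Require Import structures.
From mathcomp Require Import all_boot all_order all_algebra.
From mathcomp Require Import zify ring.
From Stdlib Require Import Classical ClassicalEpsilon.
Require Import Defs.
Set Implicit Arguments. Unset Strict Implicit. Unset Printing Implicit Defensive.
Import Order.TTheory GRing.Theory Num.Theory.

Section Grp.
Local Open Scope ring_scope.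
Variables (n : nat) (e : rel 'I_n).
Local Notation G := (GG e).

Lemma gE (a b : G) : (forall i, a.1 i = b.1 i) -> (forall p, a.2 p = b.2 p) -> a = b.
Proof. case: a b => [a1 a2] [b1 b2] /= h1 h2; congr pair; apply/ffunP => x; [exact: h1|exact: h2]. Qed.

Lemma gmul1E (a b : G) i : (gmul a b).1 i = a.1 i + b.1 i.
Proof. by rewrite /gmul /= ffunE. Qed.
Lemma gmul2E (a b : G) p : (gmul a b).2 p = a.2 p + b.2 p + a.1 (val p).2 * b.1 (val p).1.
Proof. by rewrite /gmul /= !ffunE. Qed.
Lemma ginv1E (a : G) i : (ginv a).1 i = - a.1 i.
Proof. by rewrite /ginv /= ffunE. Qed.
Lemma ginv2E (a : G) p : (ginv a).2 p = - a.2 p + a.1 (val p).2 * a.1 (val p).1.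
Proof. by rewrite /ginv /= !ffunE. Qed.
Lemma gone1E i : (gone e).1 i = 0. Proof. by rewrite /gone /= ffunE. Qed.
Lemma gone2E p : (gone e).2 p = 0. Proof. by rewrite /gone /= ffunE. Qed.

Definition gsimp := (gmul1E, gmul2E, ginv1E, ginv2E, gone1E, gone2E).

Lemma gmulA (a b c : G) : gmul a (gmul b c) = gmul (gmul a b) c.
Proof. apply: gE => [i|p]; rewrite !gsimp; ring. Qed.
Lemma gmul1g (a : G) : gmul (gone e) a = a.
Proof. apply: gE => [i|p]; rewrite !gsimp; ring. Qed.
Lemma gmulg1 (a : G) : gmul a (gone e) = a.
Proof. apply: gE => [i|p]; rewrite !gsimp; ring. Qed.
Lemma gmulVg (a : G) : gmul (ginv a) a = gone e.
Proof. apply: gE => [i|p]; rewrite !gsimp; ring. Qed.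
Lemma gmulgV (a : G) : gmul a (ginv a) = gone e.
Proof. apply: gE => [i|p]; rewrite !gsimp; ring. Qed.

Definition T (k : int) : int :=
  match k with Posz m => ('C(m, 2))%:Z | Negz m => ('C(m.+2, 2))%:Z end.

Lemma binT m : 2 * ('C(m, 2))%:Z = m%:Z * (m%:Z - 1).
Proof.
elim: m => [|m IH] //.
rewrite binS bin1 PoszD; lia.
Qed.

Lemma T2 k : 2 * T k = k * (k - 1).
Proof. case: k => m /=; first exact: binT. rewrite binT NegzE; lia. Qed.

Lemma iterE (g : G) m :
  iter m (gmul g) (gone e) =
  ([ffun i => m%:Z * g.1 i], [ffun p => m%:Z * g.2 p + T m * (g.1 (val p).2 * g.1 (val p).1)]).
Proof.
elim: m => [|m IH].
  by apply: gE => [i|p]; rewrite !gsimp /= !ffunE ?mul0r ?add0r.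
rewrite iterS IH; apply: gE => [i|p]; rewrite !gsimp /= !ffunE.
  rewrite -addn1 PoszD; ring.
rewrite binS bin1 -addn1 !PoszD; ring.
Qed.

Lemma gpow1E (g : G) k i : (gpow g k).1 i = k * g.1 i.
Proof.
case: k => m; first by rewrite /= iterE ffunE.
have -> : gpow g (Negz m) = ginv (iter m.+1 (gmul g) (gone e)) by [].
rewrite ginv1E iterE ffunE NegzE; ring.
Qed.

Lemma gpow2E (g : G) k p : (gpow g k).2 p = k * g.2 p + T k * (g.1 (val p).2 * g.1 (val p).1).
Proof.
case: k => m; first by rewrite /= iterE ffunE.
have -> : gpow g (Negz m) = ginv (iter m.+1 (gmul g) (gone e)) by [].
rewrite ginv2E iterE !ffunE /= NegzE.
have h1 := binT m.+2. have h2 := binT m.+1.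
have -> : ('C(m.+2, 2))%:Z = (m.+1)%:Z * (m.+1)%:Z - ('C(m.+1, 2))%:Z.
  rewrite !PoszD in h1 h2 *; lia.
ring.
Qed.

Definition gpsimp := (gpow1E, gpow2E).

Lemma TD a b : T (a + b) = T a + T b + a * b.
Proof. have := T2 (a + b); have := T2 a; have := T2 b; lia. Qed.

Lemma TM a b : T (a * b) = b * T a + a * a * T b.
Proof. have := T2 (a * b); have := T2 a; have := T2 b; nia. Qed.

Lemma TN a : T (- a) = a * a - T a.
Proof. have := T2 (- a); have := T2 a; lia. Qed.

Lemma gpowD (g : G) a b : gpow g (a + b) = gmul (gpow g a) (gpow g b).
Proof. apply: gE => [i|p]; rewrite ?gsimp ?gpsimp ?gsimp ?TD; ring. Qed.

Lemma gpowM (g : G) a b : gpow (gpow g a) b = gpow g (a * b).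
Proof. apply: gE => [i|p]; rewrite ?gsimp ?gpsimp ?gsimp ?gpsimp ?TM; ring. Qed.

Lemma gpowN (g : G) a : gpow g (- a) = ginv (gpow g a).
Proof. apply: gE => [i|p]; rewrite ?gsimp ?gpsimp ?gsimp ?TN; ring. Qed.

Lemma gpow0 (g : G) : gpow g 0 = gone e.
Proof. by []. Qed.

Lemma gpow_c1E (x : G) k p : (forall i, x.1 i = 0) -> (gpow x k).2 p = k * x.2 p.
Proof. move=> h; rewrite gpow2E !h; ring. Qed.

Lemma gpow_cmul (x y : G) k : (forall i, x.1 i = 0) ->
  gpow (gmul x y) k = gmul (gpow x k) (gpow y k).
Proof. move=> h; apply: gE => [i|p]; rewrite ?gsimp ?gpsimp ?gsimp ?gpsimp ?gsimp !h; ring. Qed.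

Lemma gmul_cent (x y : G) : (forall i, x.1 i = 0) -> gmul x y = gmul y x.
Proof. move=> h; apply: gE => [i|p]; rewrite !gsimp !h; ring. Qed.

Lemma gpow_mem (H : G -> Prop) g k : is_subgroup H -> H g -> H (gpow g k).
Proof.
case=> h1 hM hV hg.
have hi m : H (iter m (gmul g) (gone e)) by elim: m => //= m IH; apply: hM.
by case: k => m; [apply: hi | apply: hV; apply: (hi m.+1)].
Qed.

End Grp.

Section Rank.
Local Open Scope ring_scope.
Variable T : finType.
Local Notation F := {ffun T -> int}.
Local Notation V := 'rV[rat]_#|T|.

Definition vec (f : F) : V := \row_i (f (enum_val i))%:~R.
Definition zs (k : int) (f : F) : F := [ffun x => k * f x].

Lemma vecD f g : vec (f + g) = vec f + vec g.
Proof. by apply/rowP => i; rewrite !mxE ffunE intrD. Qed.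
Lemma vec0 : vec 0 = 0.
Proof. by apply/rowP => i; rewrite !mxE ffunE. Qed.
Lemma vecZ k f : vec (zs k f) = k%:~R *: vec f.
Proof. by apply/rowP => i; rewrite !mxE ffunE intrM. Qed.
Lemma vec_inj f g : vec f = vec g -> f = g.
Proof.
move=> h; apply/ffunP => x.
have := congr1 (fun v : V => v 0 (enum_rank x)) h.
by rewrite !mxE enum_rankK => /intr_inj.
Qed.

Definition zsub (S : F -> Prop) :=
  [/\ S 0, (forall f g, S f -> S g -> S (f + g)) & (forall f, S f -> S (- f))].

Lemma zsub_zs S k f : zsub S -> S f -> S (zs k f).
Proof.
case=> h0 hD hN hf.
have hp m : S (zs m%:Z f).
  elim: m => [|m IH].
    by have -> : zs 0 f = 0 by apply/ffunP => x; rewrite !ffunE mul0r.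
  have -> : zs m.+1%:Z f = f + zs m%:Z f.
    by apply/ffunP => x; rewrite !ffunE -addn1 PoszD; ring.
  exact: hD.
case: k => m; first exact: hp.
have -> : zs (Negz m) f = - zs m.+1%:Z f.
  by apply/ffunP => x; rewrite !ffunE NegzE; ring.
exact: hN.
Qed.

Lemma dim_add_line (K : fieldType) (vT : vectType K) (U : {vspace vT}) v :
  \dim (U + <[v]>) = (\dim U + (v \notin U))%N.
Proof.
case: (boolP (v \in U)) => hv /=.
  by rewrite memvE in hv; rewrite (addv_idPl hv) addn0.
rewrite dimv_disjoint_sum ?dim_vline.
  by congr (_ + _)%N; case: eqP hv => // ->; rewrite mem0v.
apply/eqP; rewrite -subv0; apply/subvP => w /memv_capP [wU /vlineP [k defw]].
rewrite memv0; apply/eqP; move: wU; rewrite defw.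
case: (eqVneq k 0) => [->|nk]; first by rewrite scale0r.
move=> kv; case/negP: hv.
by rewrite -(scalerK nk v) memvZ.
Qed.

Lemma span_ex (S : F -> Prop) : exists U : {vspace V},
  (forall f, S f -> vec f \in U) /\
  exists X : seq F, (forall f, f \in X -> S f) /\ U = <<map vec X>>%VS.
Proof.
have [B hB] : exists B, forall X : seq V, (\dim <<X>> <= B)%N.
  by exists (\dim (@fullv _ V)) => U; apply: dimvS; apply: subvf.
suff: forall m (X : seq F), (B - \dim <<map vec X>> <= m)%N ->
   (forall f, f \in X -> S f) ->
   exists Y : seq F, (forall f, f \in Y -> S f) /\ forall f, S f -> vec f \in <<map vec Y>>%VS.
  move=> /(_ _ [::] (leqnn _)) [] // Y [hY hS].
  by exists <<map vec Y>>%VS; split => //; exists Y.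
elim=> [|m IH] X hm hX; (case: (classic (exists f, S f /\ vec f \notin <<map vec X>>%VS)) => [[f [Sf nf]] | nex];
   last by exists X; split => // f Sf; apply/negPn/negP => nf; apply: nex; exists f).
- have hd : \dim <<map vec (f :: X)>> = (\dim <<map vec X>>).+1.
    by rewrite /= span_cons addvC dim_add_line nf addn1.
  have := hB (map vec (f :: X)); rewrite hd => hle; exfalso; move: hm hle; lia.
- have hd : \dim <<map vec (f :: X)>> = (\dim <<map vec X>>).+1.
    by rewrite /= span_cons addvC dim_add_line nf addn1.
  apply: (IH (f :: X)).
    rewrite hd; move: hm; lia.
  by move=> g; rewrite inE => /orP [/eqP ->|]; [|apply: hX].
Qed.

Definition span (S : F -> Prop) : {vspace V} := proj1_sig (constructive_indefinite_description _ (span_ex S)).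

Lemma span_mem S f : S f -> vec f \in span S.
Proof. rewrite /span; case: constructive_indefinite_description => U [h _] /=; exact: h. Qed.

Lemma span_gen S : exists X : seq F, (forall f, f \in X -> S f) /\ span S = <<map vec X>>%VS.
Proof. rewrite /span; case: constructive_indefinite_description => U [_ h] /=; exact: h. Qed.

Lemma span_min S (U : {vspace V}) : (forall f, S f -> vec f \in U) -> (span S <= U)%VS.
Proof.
move=> h; have [X [hX ->]] := span_gen S.
apply/span_subvP => v /mapP [f fX ->]; exact/h/hX.
Qed.

Lemma span_sub S S' : (forall f, S f -> S' f) -> (span S <= span S')%VS.
Proof. by move=> h; apply: span_min => f /h; apply: span_mem. Qed.

Lemma span_mul S S' d : d != 0 -> (forall f, S' f -> S (zs d f)) -> (span S' <= span S)%VS.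
Proof.
move=> nd h; apply: span_min => f /h /span_mem; rewrite vecZ => hm.
have nd' : (d%:~R : rat) != 0 by rewrite intr_eq0.
by rewrite -(scalerK nd' (vec f)) memvZ.
Qed.

Lemma span_easy S v d : d != 0 -> S (zs d v) -> vec v \in span S.
Proof.
move=> nd /span_mem; rewrite vecZ => hm.
have nd' : (d%:~R : rat) != 0 by rewrite intr_eq0.
by rewrite -(scalerK nd' (vec v)) memvZ.
Qed.

Lemma span_hard S v : zsub S -> vec v \in span S -> exists2 d, d != 0 & S (zs d v).
Proof.
move=> zS; have [X [hX ->]] := span_gen S.
suff H: forall w, w \in <<map vec X>>%VS -> exists2 d : int, d != 0 & exists2 s, S s & d%:~R *: w = vec s.
  move=> hv; have [d nd [s Ss hs]] := H _ hv; exists d => //.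
  by rewrite -vecZ in hs; rewrite (vec_inj hs).
move: (zS) => [S0 SD SN].
elim: X hX => [|x X IH] hX w /=.
  rewrite span_nil memv0 => /eqP ->; exists 1 => //; exists 0 => //.
  by rewrite scaler0 vec0.
rewrite span_cons => /memv_addP [u /vlineP [q ->] [w' hw' ->]].
have [d' nd' [s' Ss' hs']] := IH (fun f fX => hX f (mem_behead (s := x :: X) fX)) w' hw'.
have Sx : S x by apply: hX; rewrite inE eqxx.
exists (d' * denq q); first by rewrite mulf_neq0 ?denq_neq0.
exists (zs (d' * numq q) x + zs (denq q) s').
  by apply: SD; apply: zsub_zs.
rewrite vecD !vecZ -hs' scalerDr !scalerA !intrM numqE; congr (_ + _).
  congr (_ *: _); ring.
congr (_ *: _); ring.
Qed.

Lemma span_add S S' v : zsub S ->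
  (forall f, S' f <-> exists s k, S s /\ f = s + zs k v) ->
  span S' = (span S + <[vec v]>)%VS.
Proof.
move=> [S0 SD SN] h; apply/subv_anti/andP; split.
  apply: span_min => f /h [s [k [Ss ->]]].
  rewrite vecD vecZ; apply: memv_add; [exact: span_mem | exact/memvZ/memv_line].
rewrite subv_add; apply/andP; split.
  apply: span_sub => f Sf; apply/h; exists f, 0; split => //.
  by apply/ffunP => x; rewrite !ffunE mul0r addr0.
rewrite -memvE; apply: span_mem; apply/h; exists 0, 1; split => //.
by apply/ffunP => x; rewrite !ffunE mul1r add0r.
Qed.

End Rank.

Section Step.
Local Open Scope ring_scope.
Variables (n : nat) (e : rel 'I_n).
Local Notation G := (GG e).

Lemma ginvM (a b : G) : ginv (gmul a b) = gmul (ginv b) (ginv a).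
Proof. apply: gE => [i|p]; rewrite !(gsimp e); ring. Qed.
Lemma ginvK (a : G) : ginv (ginv a) = a.
Proof. apply: gE => [i|p]; rewrite !(gsimp e); ring. Qed.

Definition Ap (H : G -> Prop) : {ffun 'I_n -> int} -> Prop := fun z => exists t, H (z, t).
Definition Bp (H : G -> Prop) : {ffun Pairs e -> int} -> Prop := fun t => H (0, t).
Definition inv (H : G -> Prop) : nat := (\dim (span (Ap H)) + \dim (span (Bp H)))%N.

Lemma Ap_of (H : G -> Prop) x : H x -> Ap H x.1.
Proof. by move=> hx; exists x.2; rewrite -surjective_pairing. Qed.

Lemma gone_eq : gone e = (0, 0).
Proof. by apply: gE => [i|p]; rewrite !(gsimp e) /= ?ffunE. Qed.

Lemma zsub_Ap H : is_subgroup H -> zsub (Ap H).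
Proof.
case=> h1 hM hV; split.
- by exists 0; rewrite -gone_eq.
- move=> f g [t Hf] [t' Hg].
  suff -> : f + g = (gmul (f, t) (g, t')).1 by apply: Ap_of; apply: hM.
  by apply/ffunP => i; rewrite gmul1E /= ?ffunE.
- move=> f [t Hf].
  suff -> : - f = (ginv (f, t)).1 by apply: Ap_of; apply: hV.
  by apply/ffunP => i; rewrite ginv1E /= ?ffunE.
Qed.

Lemma zsub_Bp H : is_subgroup H -> zsub (Bp H).
Proof.
case=> h1 hM hV; split.
- by rewrite /Bp -gone_eq.
- move=> f g Hf Hg; rewrite /Bp.
  suff -> : ((0, f + g) : G) = gmul ((0, f) : G) (0, g) by apply: hM.
  by apply: gE => [i|p]; rewrite !(gsimp e) /= ?ffunE; ring.
- move=> f Hf; rewrite /Bp.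
  suff -> : ((0, - f) : G) = ginv ((0, f) : G) by apply: hV.
  by apply: gE => [i|p]; rewrite !(gsimp e) /= ?ffunE; ring.
Qed.

Lemma pow_cent (x : G) j : (forall i, x.1 i = 0) -> gpow x j = (0, zs j x.2).
Proof.
move=> h; apply: gE => [i|p]; rewrite /= ffunE.
  by rewrite gpow1E h mulr0.
by rewrite gpow_c1E.
Qed.

Variables (H K : G -> Prop) (g : G).
Hypotheses (sH : is_subgroup H) (sK : is_subgroup K) (KH : forall a, K a -> H a)
  (nK : forall h k, H h -> K k -> K (gmul (ginv h) (gmul k h))) (Hg : H g)
  (cyc : forall h, H h -> exists k, K (gmul h (gpow g (- k)))).

Definition tor := exists2 j, j != 0 & K (gpow g j).

Lemma Kmul a b : K a -> K b -> K (gmul a b). Proof. by case: sK => _ hM _; apply: hM. Qed.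
Lemma Kinv a : K a -> K (ginv a). Proof. by case: sK => _ _ hV; apply: hV. Qed.
Lemma Hmul a b : H a -> H b -> H (gmul a b). Proof. by case: sH => _ hM _; apply: hM. Qed.

Lemma fin_tor : finite_quotient K H <-> tor.
Proof.
split.
- case=> s hs.
  have hs' (j : 'I_(size s).+1) : exists a, a \in s /\ K (gmul (ginv a) (gpow g j)).
    by have [a as_ ha] := hs _ (gpow_mem j sH Hg); exists a.
  pose A j := proj1_sig (constructive_indefinite_description _ (hs' j)).
  have hA j : A j \in s /\ K (gmul (ginv (A j)) (gpow g j)).
    exact: (proj2_sig (constructive_indefinite_description _ (hs' j))).
  pose f j : 'I_(size s) := Ordinal (etrans (index_mem (A j) s) (proj1 (hA j))).
  have ninj : ~ injective f by move=> /leq_card; rewrite !card_ord ltnn.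
  have [j1 [j2 [ne eq]]] : exists j1 j2, j1 != j2 /\ f j1 = f j2.
    apply: NNPP => hne; apply: ninj => x y fxy; apply/eqP/negPn/negP => nxy.
    by apply: hne; exists x, y.
  have eA : A j1 = A j2.
    have := congr1 val eq => /= ei.
    by rewrite -(nth_index (A j1) (proj1 (hA j1))) ei nth_index //; case: (hA j2).
  exists (- (j1 : nat)%:Z + (j2 : nat)%:Z).
    apply/eqP => h; move/eqP: ne; apply; apply: val_inj => /=; lia.
  rewrite gpowD gpowN.
  suff -> : gmul (ginv (gpow g (j1 : nat)%:Z)) (gpow g (j2 : nat)%:Z) =
     gmul (gmul (ginv (gpow g (j1 : nat)%:Z)) (A j1)) (gmul (ginv (A j1)) (gpow g (j2 : nat)%:Z)).
    have e1 : gmul (ginv (gpow g (j1 : nat)%:Z)) (A j1) = ginv (gmul (ginv (A j1)) (gpow g (j1 : nat)%:Z)).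
      by rewrite ginvM ginvK.
    rewrite e1; apply: Kmul; first by apply: Kinv; exact: (proj2 (hA j1)).
    by rewrite eA; exact: (proj2 (hA j2)).
  by rewrite -gmulA (gmulA (A j1)) gmulgV gmul1g.
- case=> j0 nj0 Kj0.
  exists (map (fun r : nat => gpow g r%:Z) (iota 0 `|j0|)) => h Hh.
  have [k hk] := cyc Hh.
  have r0 : (0 <= (k %% j0)%Z) by apply: modz_ge0.
  have r1 : ((k %% j0)%Z < `|j0|%:Z) by apply: ltz_mod.
  exists (gpow g (k %% j0)%Z).
    apply/mapP; exists `|(k %% j0)%Z|%N; first by rewrite mem_iota add0n; lia.
    by rewrite gez0_abs.
  have ek : k = (k %% j0)%Z + (k %/ j0)%Z * j0 by rewrite addrC -divz_eq.
  suff -> : gmul (ginv (gpow g (k %% j0)%Z)) h = gmul (gmul (ginv (gpow g (k %% j0)%Z))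
       (gmul (gmul h (gpow g (- k))) (gpow g (k %% j0)%Z))) (gpow g ((k %/ j0)%Z * j0)).
    apply: Kmul; first by apply: nK => //; apply: gpow_mem.
    by rewrite mulrC -gpowM; apply: gpow_mem.
  by rewrite -!gmulA -gpowD -ek -gpowD addNr gpow0 gmulg1.
Qed.


Lemma inv_step : (tor -> inv H = inv K) /\ (~ tor -> inv H = (inv K).+1).
Proof.
pose a := g.1.
have zAK := zsub_Ap sK; have zBK := zsub_Bp sK.
have hA : forall f, Ap H f <-> exists s k, Ap K s /\ f = s + zs k a.
  move=> f; split.
    case=> t Hft; have [k hk] := cyc Hft.
    exists (gmul (f, t) (gpow g (- k))).1, k; split; first exact: Ap_of.
    by apply/ffunP => i; rewrite !ffunE ?gmul1E ?gpow1E /= ?ffunE /a; ring.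
  case=> s [k [[t Kst] ->]].
  suff -> : s + zs k a = (gmul (s, t) (gpow g k)).1.
    by apply: Ap_of; apply: Hmul; [apply: KH | apply: gpow_mem].
  by apply/ffunP => i; rewrite !ffunE ?gmul1E ?gpow1E /= ?ffunE /a.
have spA := span_add zAK hA.
case: (classic (exists2 j, j != 0 & Ap K (zs j a))) => [[j0 nj0 [t0 Kk0]] | hn].
-
  have dA : \dim (span (Ap H)) = \dim (span (Ap K)).
    by rewrite spA dim_add_line (span_easy nj0 (ex_intro _ t0 Kk0)) addn0.
  pose k0 : G := (zs j0 a, t0).
  have Kk0' : K k0 := Kk0.
  pose u := gmul (gpow g j0) (ginv k0).
  have hu : forall i, u.1 i = 0.
    by move=> i; rewrite gmul1E ginv1E gpow1E /= ffunE /a; ring.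
  have Hu : H u by apply: Hmul; [apply: gpow_mem | case: sH => _ _ hV; apply: hV; apply: KH].
  pose c := u.2.
  have ek0 : k0 = gmul (ginv u) (gpow g j0).
    by rewrite /u ginvM ginvK -gmulA gmulVg gmulg1.
  have hui : forall i, (ginv u).1 i = 0 by move=> i; rewrite ginv1E hu oppr0.
  have pu j : gpow u j = (0, zs j c) by rewrite pow_cent.
  have pui j : gpow (ginv u) j = (0, zs (- j) c).
    rewrite pow_cent //; congr pair; apply/ffunP => p; rewrite !ffunE !gpow1E; ring.
  have pk0 j : gpow k0 j = gmul (0, zs (- j) c) (gpow g (j0 * j)).
    by rewrite ek0 gpow_cmul // gpowM pui.
  pose S' := fun t => exists s k, Bp K s /\ t = s + zs k c.
  have hS'sub : forall t, S' t -> Bp H t.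
    move=> t [s [k [Ks ->]]]; rewrite /Bp.
    suff -> : ((0, s + zs k c) : G) = gmul (0, s) (gpow u k).
      by apply: Hmul; [apply: KH | apply: gpow_mem].
    by rewrite pu; apply: gE => [i|p]; rewrite !(gsimp e) /= ?ffunE; ring.
  have hmul : forall t, Bp H t -> S' (zs j0 t).
    move=> t Ht; have [k hk] := cyc Ht.
    have KX := Kmul (gpow_mem j0 sK hk) (gpow_mem k sK Kk0').
    have z0 : forall i, ((0, t) : G).1 i = 0 by move=> i; rewrite /= ffunE.
    rewrite (gpow_cmul _ _ z0) pk0 gpowM (pow_cent _ z0) in KX.
    exists (zs j0 t - zs k c), k; split.
      rewrite /Bp; move: KX; congr K.
      have e1 : - k * j0 = - (k * j0) by ring.
      have e2 : j0 * k = k * j0 by ring.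
      rewrite e1 e2; apply: gE => [i|p]; rewrite ?(gsimp e) ?gpsimp ?(gsimp e) /= ?ffunE.
        ring.
      rewrite TN; ring.
    by apply/ffunP => p; rewrite !ffunE; ring.
  have eB : span (Bp H) = span S'.
    apply/subv_anti/andP; split; first exact: span_mul nj0 hmul.
    exact: span_sub hS'sub.
  have eS' : span S' = (span (Bp K) + <[vec c]>)%VS.
    by apply: span_add => //.
  have torE : tor <-> vec c \in span (Bp K).
    split.
      case=> j1 nj1 Kj1; apply: (span_easy nj1).
      have K1 := Kmul (gpow_mem j1 sK Kk0') (Kinv (gpow_mem j0 sK Kj1)).
      rewrite pk0 gpowM -gmulA (mulrC j1) gmulgV gmulg1 in K1.
      move: (Kinv K1); rewrite /Bp; congr K.
      by apply: gE => [i|p]; rewrite !(gsimp e) /= ?ffunE; ring.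
    move/(span_hard zBK) => [j nj Kj]; exists (j0 * j); first by rewrite mulf_neq0.
    have K1 := Kmul Kj (gpow_mem j sK Kk0').
    rewrite pk0 gmulA in K1; move: K1; congr K.
    rewrite -[RHS]gmul1g; congr gmul.
    by apply: gE => [i|p]; rewrite !(gsimp e) /= ?ffunE; ring.
  have dI : inv H = (inv K + (vec c \notin span (Bp K)))%N.
    by rewrite /inv dA eB eS' dim_add_line addnA.
  split.
    by move=> /torE hc; rewrite dI hc addn0.
  move=> nt; rewrite dI; case: (boolP (vec c \in span (Bp K))) => [/torE //|_].
  by rewrite addn1.
-
  have na : vec a \notin span (Ap K).
    apply/negP => /(span_hard zAK) [d nd hd]; apply: hn; exists d => //.
  have dA : \dim (span (Ap H)) = (\dim (span (Ap K))).+1.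
    by rewrite spA dim_add_line na addn1.
  have eB : span (Bp H) = span (Bp K).
    apply/subv_anti/andP; split; last by apply: span_sub => t; apply: KH.
    apply: span_sub => t Ht; have [k hk] := cyc Ht.
    case: (eqVneq k 0) => [k0|nk].
      by move: hk; rewrite k0 oppr0 gpow0 gmulg1.
    exfalso; apply: hn; exists (- k); first by rewrite oppr_eq0.
    suff -> : zs (- k) a = (gmul (0, t) (gpow g (- k))).1 by apply: Ap_of.
    by apply/ffunP => i; rewrite !ffunE ?gmul1E ?gpow1E /= ?ffunE /a; ring.
  have nt : ~ tor.
    case=> j nj Kj; apply: hn; exists j => //.
    suff -> : zs j a = (gpow g j).1 by apply: Ap_of.
    by apply/ffunP => i; rewrite !ffunE ?gpow1E /= ?ffunE /a.
  split => // _.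
  by rewrite /inv dA eB.
Qed.

End Step.

Section Series.
Variables (n : nat) (e : rel 'I_n).
Local Notation G := (GG e).

Lemma inv_ext (P Q : G -> Prop) : (forall a, P a <-> Q a) -> inv P = inv Q.
Proof.
move=> h; rewrite /inv; congr (_ + _)%N; congr (\dim _); apply/subv_anti/andP; split;
  apply: span_sub => f.
- by case=> t /h; exists t.
- by case=> t /h; exists t.
- by move/h.
- by move/h.
Qed.

Lemma inv_triv (P : G -> Prop) : (forall a, P a <-> a = gone e) -> inv P = 0%N.
Proof.
move=> h; rewrite /inv.
have z1 : forall f, Ap P f -> f = 0%R.
  by move=> f [t /h]; rewrite gone_eq => -[].
have z2 : forall f, Bp P f -> f = 0%R.
  by move=> f /h; rewrite gone_eq => -[].
have d1 : \dim (span (Ap P)) = 0%N.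
  apply/eqP; rewrite -leqn0; apply: leq_trans (dimvS (_ : (_ <= 0)%VS)) _; last by rewrite dimv0.
  apply: span_min => f /z1 ->.
  by rewrite vec0 mem0v.
have d2 : \dim (span (Bp P)) = 0%N.
  apply/eqP; rewrite -leqn0; apply: leq_trans (dimvS (_ : (_ <= 0)%VS)) _; last by rewrite dimv0.
  apply: span_min => f /z2 ->.
  by rewrite vec0 mem0v.
by rewrite d1 d2.
Qed.

Lemma series_inv (H : G -> Prop) m s : cyclic_series H m s -> num_infinite_factors m s (inv H).
Proof.
case=> s0 sm sub nrm cq.
pose infb (i : nat) : bool :=
  if excluded_middle_informative (~ finite_quotient (s i.+1) (s i)) then true else false.
have infbP i : infb i <-> ~ finite_quotient (s i.+1) (s i).
  by rewrite /infb; case: excluded_middle_informative.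
exists [set i : 'I_m | infb i].
  have key : forall i, (i <= m)%N -> inv (s 0%N) = (inv (s i) + \sum_(j < i) infb j)%N.
    elim=> [|i IH] lim; first by rewrite big_ord0 addn0.
    rewrite big_ord_recr /= IH; last by apply: ltnW.
    suff -> : inv (s i) = (inv (s i.+1) + infb i)%N by rewrite -addnA (addnC (infb i)).
    have [sH] := sub _ lim.
    case: (nrm _ lim) => sK KH nK.
    case: (cq _ lim) => g Hg cyc.
    have sH' : is_subgroup (s i) by apply: sub.
    have [h1 h2] := inv_step sH' sK KH Hg cyc.
    have ft := fin_tor sH' sK nK Hg cyc.
    case: (boolP (infb i)) => hi.
      rewrite h2 ?addn1 //; move=> /ft; exact/infbP.
    rewrite h1 ?addn0 //; apply/ft.
    by apply: NNPP => nf; move/negP: hi; apply; apply/infbP.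
  have := key m (leqnn m).
  rewrite (inv_ext s0) (inv_triv sm) add0n => ->.
  rewrite -sum1_card big_mkcond /=; apply: eq_bigr => i _.
  by rewrite inE; case: (infb i).
by move=> i; rewrite inE; apply: infbP.
Qed.

End Series.

Section Main.
Local Open Scope ring_scope.
Variables (n : nat) (e : rel 'I_n) (e_sym : symmetric e) (e_irr : irreflexive e)
  (i0 : 'I_n) (z0 : int) (t : {ffun Pairs e -> int}) (hz0 : z0 != 0%R).
Local Notation G := (GG e).

Definition g0 : G := gen_elt i0 z0 t.
Definition D : {set 'I_n} := [set j | (j == i0) || e i0 j].
Definition dl := enum D.
Definition a := size dl.

Lemma g01 x : g0.1 x = if x == i0 then z0 else 0.
Proof. by rewrite /g0 /gen_elt /= ffunE. Qed.

Lemma nz_add (x y : int) : x + y != 0 -> (x != 0) || (y != 0).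
Proof.
move=> h; apply/negPn/negP; rewrite negb_or => /andP [/negPn/eqP hx /negPn/eqP hy].
by move: h; rewrite hx hy addr0 eqxx.
Qed.

Lemma cent_char h : centralizer g0 h <-> (forall j, j \notin D -> h.1 j = 0).
Proof.
rewrite /centralizer; split.
- move=> hc j jD.
  have hp : forall p : Pairs e, h.1 (val p).2 * g0.1 (val p).1 = g0.1 (val p).2 * h.1 (val p).1.
    move=> p; have := congr1 (fun x : G => x.2 p) hc; rewrite !gmul2E => E; apply: (addrI (h.2 p + g0.2 p)); rewrite E; ring.
  move: jD; rewrite inE negb_or => /andP [ji0 nej].
  case: (ltngtP i0 j) => [lt|gt|eq].
  + have hne : nonedge e (i0, j) by rewrite /nonedge /= lt nej.
    have := hp (exist _ (i0, j) hne); rewrite /= !g01 eqxx (negbTE ji0) mul0r.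
    by move/eqP; rewrite mulf_eq0 (negbTE hz0) orbF => /eqP.
  + have hne : nonedge e (j, i0) by rewrite /nonedge /= gt e_sym nej.
    have := hp (exist _ (j, i0) hne); rewrite /= !g01 eqxx (negbTE ji0) mulr0.
    by move/esym/eqP; rewrite mulf_eq0 (negbTE hz0) /= => /eqP.
  + by move/eqP: ji0; case; apply: val_inj.
- move=> hD; apply: gE => [i|p]; rewrite ?gmul1E ?gmul2E; first ring.
  suff -> : h.1 (val p).2 * g0.1 (val p).1 = g0.1 (val p).2 * h.1 (val p).1 by ring.
  case: p => [[x y] /= /andP [/= xy nxy]].
  rewrite !g01; case: (eqVneq x i0) => [ex|nx].
    have ny : y != i0 by apply/eqP => ey; move: xy; rewrite ex ey ltnn.
    rewrite (negbTE ny) hD ?mulr0 ?mul0r //.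
    by rewrite inE negb_or ny -ex.
  case: (eqVneq y i0) => [ey|ny]; last by rewrite mulr0 mul0r.
  rewrite (hD x) ?mulr0 //.
  by rewrite inE negb_or nx e_sym -ey.
Qed.

Lemma idx_lt j : j \in D -> (index j dl < a)%N.
Proof. by move=> jD; rewrite /a index_mem /dl mem_enum. Qed.

Definition sr (i : nat) (h : G) : Prop :=
  (forall j, h.1 j != 0 -> (j \in D) && (i <= index j dl)%N) /\
  (forall p, h.2 p != 0 -> (i <= a + enum_rank p)%N).

Lemma sr_big i h : (a <= i)%N -> sr i h -> forall j, h.1 j = 0.
Proof.
move=> ai [h1 _] j; apply/eqP/negPn/negP => /h1 /andP [jD le].
by have := leq_trans ai le; rewrite leqNgt (idx_lt jD).
Qed.

Lemma sr_sub i : is_subgroup (sr i).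
Proof.
split.
- by split => [j|p]; rewrite ?gone1E ?gone2E eqxx.
- move=> x y [x1 x2] [y1 y2]; split.
    move=> j; rewrite gmul1E => /nz_add /orP [/x1|/y1] //.
  move=> p; case: (leqP i a) => [ia|ai]; first by move=> _; apply: leq_trans ia (leq_addr _ _).
  rewrite gmul2E (sr_big (ltnW ai) (conj x1 x2)) mul0r addr0 => /nz_add /orP [/x2|/y2] //.
- move=> x [x1 x2]; split.
    by move=> j; rewrite ginv1E oppr_eq0 => /x1.
  move=> p; case: (leqP i a) => [ia|ai]; first by move=> _; apply: leq_trans ia (leq_addr _ _).
  by rewrite ginv2E (sr_big (ltnW ai) (conj x1 x2)) mul0r addr0 oppr_eq0 => /x2.
Qed.

Lemma sr_mono i h : sr i.+1 h -> sr i h.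
Proof.
case=> h1 h2; split.
  by move=> j /h1 /andP [-> le]; apply: ltnW.
by move=> p /h2; apply: ltnW.
Qed.

Lemma sr_norm i h k : sr i h -> sr i.+1 k -> sr i.+1 (gmul (ginv h) (gmul k h)).
Proof.
move=> sh sk; have [k1 k2] := sk; split.
  move=> j; have -> : (gmul (ginv h) (gmul k h)).1 j = k.1 j by rewrite !gmul1E ginv1E; ring.
  exact: k1.
move=> p; case: (leqP i.+1 a) => [ia|ai]; first by move=> _; apply: leq_trans ia (leq_addr _ _).
have hz := sr_big (ltnW ai) sk.
have hz' := sr_big ai sh.
have -> : (gmul (ginv h) (gmul k h)).2 p = k.2 p.
  by rewrite !gmul2E ginv2E !gmul1E ginv1E !hz !hz'; ring.
exact: k2.
Qed.

Lemma sr_cyc i : (i < a + #|{: Pairs e}|)%N -> exists2 g, sr i g &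
  (forall h, sr i h -> exists k, sr i.+1 (gmul h (gpow g (- k)))) /\ ~ tor (sr i.+1) g.
Proof.
move=> lim; case: (ltnP i a) => [ia|ai].
- pose j := nth i0 dl i.
  have jD : j \in D by rewrite -[j \in D](mem_enum D) mem_nth.
  have ij : index j dl = i by apply: index_uniq => //; apply: enum_uniq.
  pose dj : {ffun 'I_n -> int} := [ffun x => if x == j then 1 else 0].
  exists ((dj, 0) : G).
    split => [x|p] /=; rewrite ffunE; last by rewrite eqxx.
    by case: (eqVneq x j) => [->|_]; [rewrite jD ij leqnn | rewrite eqxx].
  split.
    move=> h [h1 h2]; exists (h.1 j); split.
      move=> x; rewrite gmul1E gpow1E /= ffunE.
      case: (eqVneq x j) => [->|nx]; first by rewrite mulr1 addrN eqxx.
      rewrite mulr0 addr0 => /h1 /andP [xD le]; rewrite xD /= ltn_neqAle le andbT.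
      apply: contra nx => /eqP ex; apply/eqP.
      by rewrite /j ex nth_index // /dl mem_enum.
    by move=> p _; apply: leq_trans ia (leq_addr _ _).
  case=> k nk [c1 _]; have := c1 j.
  by rewrite gpow1E /= ffunE eqxx mulr1 ij ltnn andbF => /(_ nk).
- have ir : (i - a < #|{: Pairs e}|)%N by rewrite ltn_subLR.
  pose p0 := enum_val (Ordinal ir).
  have hp0 : (enum_rank p0 : nat) = (i - a)%N by rewrite /p0 enum_valK.
  pose dp : {ffun Pairs e -> int} := [ffun q => if q == p0 then 1 else 0].
  have hz : forall x, ((0, dp) : G).1 x = 0 by move=> x; rewrite /= ffunE.
  exists ((0, dp) : G).
    split => [x|q]; first by rewrite hz eqxx.
    rewrite /= ffunE; case: (eqVneq q p0) => [->|_]; last by rewrite eqxx.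
    by rewrite hp0 subnKC.
  split.
    move=> h [h1 h2]; have hz' := sr_big ai (conj h1 h2); exists (h.2 p0); split.
      by move=> x; rewrite gmul1E gpow1E hz' hz mulr0 addr0 eqxx.
    move=> q; rewrite (pow_cent _ hz) gmul2E hz' mul0r addr0 /= !ffunE.
    case: (eqVneq q p0) => [->|nq]; first by rewrite mulr1 addrN eqxx.
    rewrite mulr0 addr0 => /h2 le.
    have : (enum_rank q : nat) != (i - a)%N.
      apply: contra nq => /eqP eq; apply/eqP; rewrite -(enum_rankK q) /p0; congr enum_val.
      exact: val_inj.
    move=> ne; rewrite ltn_neqAle le andbT; apply: contra ne => /eqP ->; by rewrite addKn.
  case=> k nk [_ c2]; have := c2 p0.
  rewrite (pow_cent _ hz) /= !ffunE eqxx mulr1 => /(_ nk); rewrite hp0; lia.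
Qed.

Lemma sr_0 h : sr 0 h <-> centralizer g0 h.
Proof.
rewrite cent_char; split.
- case=> h1 _ j jD; apply/eqP/negPn/negP => /h1; by rewrite (negbTE jD).
- move=> hD; split => [j nz|p _] //; rewrite leq0n andbT.
  by apply/negPn/negP => jD; move: nz; rewrite hD // eqxx.
Qed.

Lemma sr_m h : sr (a + #|{: Pairs e}|) h <-> h = gone e.
Proof.
split.
- case=> h1 h2; have hz := sr_big (leq_addr _ _) (conj h1 h2).
  apply: gE => [j|p]; rewrite ?gone1E ?gone2E ?hz //.
  by apply/eqP/negPn/negP => /h2; rewrite leq_add2l leqNgt ltn_ord.
- by move=> ->; split => [j|p]; rewrite ?gone1E ?gone2E eqxx.
Qed.

Lemma ser : cyclic_series (centralizer g0) (a + #|{: Pairs e}|) sr.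
Proof.
split.
- move=> h; exact: sr_0.
- move=> h; exact: sr_m.
- move=> i _; exact: sr_sub.
- move=> i _; split; [exact: sr_sub | exact: sr_mono | move=> h k sh sk; exact: sr_norm].
- by move=> i lt; have [g sg [cy _]] := sr_cyc lt; exists g.
Qed.

Lemma main_sec : hirsch_number (centralizer g0) (#|[set j | e i0 j]| + #|{: Pairs e}| + 1)%N.
Proof.
split; first by exists (a + #|{: Pairs e}|)%N, sr; exact: ser.
move=> m s hs.
have [I cI hI] := series_inv ser.
have eI : I = setT.
  apply/setP => i; rewrite inE; apply/hI.
  have [g sg [cy nt]] := sr_cyc (ltn_ord i).
  move/(fin_tor (sr_sub i) (sr_sub i.+1) (fun h k sh sk => sr_norm sh sk) sg cy); exact: nt.
have invC : inv (centralizer g0) = (a + #|{: Pairs e}|)%N by rewrite -cI eI cardsT card_ord.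
have ha : a = (#|[set j | e i0 j]| + 1)%N.
  rewrite /a /dl -cardE.
  have -> : D = i0 |: [set j | e i0 j] by apply/setP => x; rewrite !inE.
  by rewrite cardsU1 inE e_irr addnC.
have := series_inv hs; rewrite invC ha.
by rewrite addnAC.
Qed.

End Main.

Theorem lemma4p1 (n : nat) (e : rel 'I_n) (e_sym : symmetric e)
    (e_irr : irreflexive e) (i0 : 'I_n) (z0 : int) (t : {ffun Pairs e -> int})
    (hz0 : z0 != 0%R) :
  @hirsch_number n e (@centralizer n e (@gen_elt n e i0 z0 t))
    (#|[set j | e i0 j]| + #|{: Pairs e}| + 1)%N.
Proof.
exact: (main_sec e_sym e_irr i0 t hz0).
Qed.
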